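(* Let $\gamma:\mathbb{R}/2\pi\mathbb{Z}\to\mathbb{R}^4$, $\gamma(t)=(\cos t,\sin t,\cos 2t,\sin 2t)$, where $\mathbb{R}^4$ carries its standard symplectic structure. Then the outer symplectic billiard correspondence with respect to (the image of) $\gamma$ has no non-degenerate $4$-periodic orbits.
   Context: For a closed curve (1-dimensional submanifold) $M\subset\mathbb{R}^4$ with symplectic form $\omega$, two points $z,z'$ are in outer symplectic billiard correspondence if $Q=\tfrac12(z+z')\in M$ and $\omega(z'-z,\zeta)=0$ for all $\zeta\in T_QM$. A $4$-periodic orbit is a tuple $(z_1,z_2,z_3,z_4)$ with $z_i,z_{i+1}$ in correspondence for $i=1,\dots,4$ (indices mod $4$); it is non-degenerate if there is no $i$ with $z_{i-1}=z_{i+1}$ (indices mod 4). *)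

(* Defs.v *)
From Stdlib Require Import Reals.
From Coquelicot Require Import Coquelicot.
Open Scope R_scope.

(* Points of R^4, coordinates (x1, y1, x2, y2). *)
Record R4 := mkR4 { c1 : R; c2 : R; c3 : R; c4 : R }.

Definition R4add (u v : R4) : R4 :=
  mkR4 (c1 u + c1 v) (c2 u + c2 v) (c3 u + c3 v) (c4 u + c4 v).
Definition R4sub (u v : R4) : R4 :=
  mkR4 (c1 u - c1 v) (c2 u - c2 v) (c3 u - c3 v) (c4 u - c4 v).
Definition R4scal (a : R) (u : R4) : R4 :=
  mkR4 (a * c1 u) (a * c2 u) (a * c3 u) (a * c4 u).

Definition omega (u v : R4) : R :=
  c1 u * c2 v - c2 u * c1 v + c3 u * c4 v - c4 u * c3 v.

Definition gamma (t : R) : R4 := mkR4 (cos t) (sin t) (cos (2 * t)) (sin (2 * t)).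

Definition dgamma (t : R) : R4 :=
  mkR4 (Derive (fun s => c1 (gamma s)) t) (Derive (fun s => c2 (gamma s)) t)
       (Derive (fun s => c3 (gamma s)) t) (Derive (fun s => c4 (gamma s)) t).

Definition onM (Q : R4) : Prop := exists t, Q = gamma t.

Definition tangentM (t : R) (zeta : R4) : Prop := exists s : R, zeta = R4scal s (dgamma t).

Definition osb_corr (z z' : R4) : Prop :=
  exists t : R, R4scal (1/2) (R4add z z') = gamma t /\
    forall zeta, tangentM t zeta -> omega (R4sub z' z) zeta = 0.

Definition periodic4 (z1 z2 z3 z4 : R4) : Prop :=
  osb_corr z1 z2 /\ osb_corr z2 z3 /\ osb_corr z3 z4 /\ osb_corr z4 z1.

(* Non-degenerate: no i with z_{i-1} = z_{i+1} (indices mod 4). *)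
Definition nondegenerate4 (z1 z2 z3 z4 : R4) : Prop :=
  z4 <> z2 /\ z1 <> z3 /\ z2 <> z4 /\ z3 <> z1.

(* Main.v *)
Require Import Defs.
From Stdlib Require Import Reals Lra Psatz.
From Coquelicot Require Import Coquelicot.
Open Scope R_scope.

Lemma corr_eqs z z' : osb_corr z z' -> exists t,
  Defs.c1 z' = 2 * cos t - Defs.c1 z /\ Defs.c2 z' = 2 * sin t - Defs.c2 z /\
  Defs.c3 z' = 2 * (cos t * cos t - sin t * sin t) - Defs.c3 z /\
  Defs.c4 z' = 2 * (2 * sin t * cos t) - Defs.c4 z.
Proof.
  intros [t [H _]]. exists t.
  pose proof (f_equal Defs.c1 H) as E1. pose proof (f_equal Defs.c2 H) as E2.
  pose proof (f_equal Defs.c3 H) as E3. pose proof (f_equal Defs.c4 H) as E4.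
  unfold gamma, R4scal, R4add in *; simpl in *.
  rewrite cos_2a in E3. rewrite sin_2a in E4.
  repeat split; lra.
Qed.

Lemma sq0 a b : a * a + b * b = 0 -> a = 0 /\ b = 0.
Proof. intros. split; nra. Qed.

Theorem mainTheorem6 :
  ~ (exists z1 z2 z3 z4 : R4, periodic4 z1 z2 z3 z4 /\ nondegenerate4 z1 z2 z3 z4).
Proof.
  intros [z1 [z2 [z3 [z4 [[H1 [H2 [H3 H4]]] [N1 [N2 [N3 N4]]]]]]]].
  apply corr_eqs in H1 as [t1 [A1 [A2 [A3 A4]]]].
  apply corr_eqs in H2 as [t2 [B1 [B2 [B3 B4]]]].
  apply corr_eqs in H3 as [t3 [G1 [G2 [G3 G4]]]].
  apply corr_eqs in H4 as [t4 [D1 [D2 [D3 D4]]]].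
  set (p1 := cos t1) in *. set (q1 := sin t1) in *.
  set (p2 := cos t2) in *. set (q2 := sin t2) in *.
  set (p3 := cos t3) in *. set (q3 := sin t3) in *.
  set (p4 := cos t4) in *. set (q4 := sin t4) in *.
  assert (Ep : p4 = p1 + p3 - p2) by lra.
  assert (Eq : q4 = q1 + q3 - q2) by lra.
  assert (Ec : p1*p1 - q1*q1 + (p3*p3 - q3*q3) = p2*p2 - q2*q2 + (p4*p4 - q4*q4)) by lra.
  assert (Es : q1*p1 + q3*p3 = q2*p2 + q4*p4) by lra.
  rewrite Ep, Eq in Ec, Es.
  set (u1 := p1 - p2). set (u2 := q1 - q2). set (v1 := p2 - p3). set (v2 := q2 - q3).
  assert (R1 : u1*v1 - u2*v2 = 0) by (unfold u1, u2, v1, v2; nra).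
  assert (R2 : u1*v2 + u2*v1 = 0) by (unfold u1, u2, v1, v2; nra).
  assert (P : (u1*u1 + u2*u2) * (v1*v1 + v2*v2) = 0).
  { replace ((u1*u1 + u2*u2) * (v1*v1 + v2*v2)) with
      ((u1*v1 - u2*v2)*(u1*v1 - u2*v2) + (u1*v2 + u2*v1)*(u1*v2 + u2*v1)) by ring.
    rewrite R1, R2; ring. }
  apply Rmult_integral in P as [P|P]; apply sq0 in P as [Pa Pb];
    unfold u1, u2, v1, v2 in *.
  - apply N2. destruct z1, z3; simpl in *. f_equal; nra.
  - apply N3. destruct z2, z4; simpl in *. f_equal; nra.
Qed.
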